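(* Let $G$ be a graph of order $n\ge 1$. Then $$\frac{n^2+n+2}{2}\le d(G)\le 2^n.$$ The left equality holds if and only if $G\cong K_{n_1,n_2,\ldots,n_k}$ is a complete multipartite graph with $n_i\le 2$ for all $1\le i\le k$ and $n_1+\cdots+n_k=n$. The right equality holds if and only if $G\cong sK_1\cup tK_2$, a disjoint union of $s$ isolated vertices and $t$ disjoint edges, with $s+2t=n$.
   Context: All graphs are finite, simple and undirected. A subset $D\subseteq V(G)$ is a dissociation set of $G$ if the induced subgraph $G[D]$ has maximum degree at most $1$; the empty set is a dissociation set. $d(G)$ denotes the total number of dissociation sets of $G$, including the empty set. In particular, the graph with no vertices has $d=1$. *)

(* Defs.v *)
From mathcomp Require Import all_boot.
Set Implicit Arguments. Unset Strict Implicit. Unset Printing Implicit Defensive.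

Definition simple_graph (T : finType) (e : rel T) : Prop :=
  irreflexive e /\ symmetric e.

Definition dissociation (T : finType) (e : rel T) (D : {set T}) : bool :=
  [forall x in D, #|[set y in D | e x y]| <= 1].

Definition dnum (T : finType) (e : rel T) : nat :=
  #|[set D : {set T} | dissociation e D]|.

(* G is a complete multipartite graph K_{n_1,...,n_k} with all n_i <= 2:
   the vertices are partitioned into the (nonempty) fibres of a labelling p,
   each part has at most 2 vertices, and two distinct vertices are adjacent
   iff they lie in different parts. *)
Definition complete_multipartite_le2 (T : finType) (e : rel T) : Prop :=
  exists p : T -> nat,
    (forall i, #|[set x | p x == i]| <= 2) /\
    (forall x y, x != y -> e x y = (p x != p y)).

(* G is isomorphic to sK_1 ∪ tK_2: vertices partitioned into parts of size
   1 or 2 (fibres of p), edges are exactly the pairs of distinct vertices in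
   the same part. *)
Definition union_K1_K2 (T : finType) (e : rel T) : Prop :=
  exists p : T -> nat,
    (forall i, #|[set x | p x == i]| <= 2) /\
    (forall x y, e x y = (x != y) && (p x == p y)).

(* Main.v *)
Require Import Defs.
From mathcomp Require Import all_boot.
From mathcomp Require Import zify.

Lemma diss_sub (T : finType) (e : rel T) (D D' : {set T}) :
  D \subset D' -> dissociation e D' -> dissociation e D.
Proof.
move=> sub /forall_inP H; apply/forall_inP => x xD.
apply: leq_trans (H x (subsetP sub x xD)).
apply: subset_leq_card; apply/subsetP => y; rewrite !inE => /andP[yD ->].
by rewrite (subsetP sub y yD).
Qed.

Lemma small_diss (T : finType) (e : rel T) (D : {set T}) :
  irreflexive e -> #|D| <= 2 -> dissociation e D.
Proof.
move=> irr HD; apply/forall_inP => x xD.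
have: #|[set y in D | e x y]| <= #|D :\ x|.
  apply: subset_leq_card; apply/subsetP => y; rewrite !inE => /andP[yD exy].
  rewrite yD andbT; apply/eqP => yx; by rewrite yx irr in exy.
move: HD; rewrite (cardsD1 x D) xD; lia.
Qed.

Lemma card_le2 (T : finType) :
  #|[set D : {set T} | #|D| <= 2]| = 1 + #|T| + 'C(#|T|, 2).
Proof.
have ->: [set D : {set T} | #|D| <= 2] =
   [set D : {set T} | #|D| == 0] :|: ([set D : {set T} | #|D| == 1] :|: [set D : {set T} | #|D| == 2]).
  by apply/setP => D; rewrite !inE; case: #|D : {set T}| => [|[|[|k]]].
have H1: [set D : {set T} | #|D| == 1] :&: [set D : {set T} | #|D| == 2] = set0.
  by apply/setP => D; rewrite !inE; case: #|D : {set T}| => [|[|[|k]]].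
have H2: [set D : {set T} | #|D| == 0] :&:
   ([set D : {set T} | #|D| == 1] :|: [set D : {set T} | #|D| == 2]) = set0.
  by apply/setP => D; rewrite !inE; case: #|D : {set T}| => [|[|[|k]]].
rewrite cardsU H2 cardsU H1 !cards0 !card_draws bin0 bin1; lia.
Qed.

Lemma bin2_double n : 2 * 'C(n, 2) = n * n.-1.
Proof.
elim: n => [|n IH] //; rewrite binS bin1 mulnDr IH; case: n {IH} => //= n; lia.
Qed.

Lemma partition_of (T : finType) (f : rel T) :
  irreflexive f -> symmetric f -> (forall x, #|[set y | f x y]| <= 1) ->
  exists p : T -> nat, (forall i, #|[set x | p x == i]| <= 2) /\
    (forall x y, x != y -> f x y = (p x == p y)).
Proof.
move=> irr sym deg.
pose q x := odflt x [pick y | f x y].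
have qE x y : f x y -> q x = y.
  move=> fxy; rewrite /q; case: pickP => [z fxz|/(_ y)]; last by rewrite fxy.
  move/card_le1_eqP: (deg x) => H; apply: H; by rewrite inE.
have qf x : q x != x -> f x (q x).
  by rewrite /q; case: pickP => [z fxz|] //= ; rewrite eqxx.
pose p x := minn (enum_rank x) (enum_rank (q x)).
have pv x : exists2 u, (u == x) || (u == q x) & p x = enum_rank u.
  rewrite /p /minn; case: ifP => _; [exists x | exists (q x)];
    by rewrite ?eqxx ?orbT.
have key x y : p x = p y -> [\/ x = y, x = q y, q x = y | q x = q y].
  case: (pv x) => u Hu ->; case: (pv y) => v Hv -> Huv; have uv := enum_rank_inj (ord_inj Huv).
  subst v; move: Hu Hv => /orP[]/eqP-> /orP[]/eqP H; by [constructor 1|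
    constructor 2|constructor 3|constructor 4].
have main x y : x != y -> f x y = (p x == p y).
  move=> nxy; apply/idP/eqP => [fxy | ].
    have fyx : f y x by rewrite sym.
    by rewrite /p (qE _ _ fxy) (qE _ _ fyx) minnC.
  move/key => [xy|xqy|qxy|qq].
  - by rewrite xy eqxx in nxy.
  - have: q y != y by rewrite -xqy.
    by move/qf; rewrite -xqy sym.
  - by rewrite -qxy; apply: qf; rewrite qxy eq_sym.
  - case: (eqVneq (q x) x) => [qxx|qxx].
      have: q y != y by rewrite -qq qxx.
      by move/qf; rewrite -qq qxx sym.
    case: (eqVneq (q y) y) => [qyy|qyy].
      by have := qf _ qxx; rewrite qq qyy.
    have h1 := qf _ qxx; have h2 := qf _ qyy; rewrite -qq in h2.
    rewrite sym in h1; rewrite sym in h2.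
    by move: nxy; rewrite -(qE _ _ h1) -(qE _ _ h2) eqxx.
exists p; split => // i; rewrite leqNgt; apply/negP.
move=> /card_gt2P [a [b [c [[]]]]]; rewrite !inE => /eqP pa /eqP pb /eqP pc.
move=> [nab nbc nca].
have fab : f a b by rewrite (main a b nab) pa pb.
have fac : f a c by rewrite (main a c) ?pa ?pc // eq_sym.
by move: nbc; rewrite -(qE _ _ fab) -(qE _ _ fac) eqxx.
Qed.

Lemma two_nbrs (T : finType) (e : rel T) (D : {set T}) w u v :
  w \in D -> u \in D -> v \in D -> u != v -> e w u -> e w v ->
  ~~ dissociation e D.
Proof.
move=> wD uD vD nuv ewu ewv; apply/negP => /forall_inP /(_ w wD).
rewrite leqNgt => /negP; apply; apply/card_gt1P; exists u, v.
by rewrite !inE uD vD ewu ewv.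
Qed.

Theorem theorem2p1 (T : finType) (e : rel T) :
  simple_graph e -> 1 <= #|T| ->
  [/\ #|T| ^ 2 + #|T| + 2 <= 2 * dnum e,
      dnum e <= 2 ^ #|T|,
      2 * dnum e = #|T| ^ 2 + #|T| + 2 <-> complete_multipartite_le2 e
    & dnum e = 2 ^ #|T| <-> union_K1_K2 e].
Proof.
move=> [irr sym] Hn.
set Dset := [set D : {set T} | dissociation e D].
have dE : dnum e = #|Dset| by [].
have sub2 : [set D : {set T} | #|D| <= 2] \subset Dset.
  by apply/subsetP => D; rewrite !inE; exact: small_diss.
have le2 := subset_leqif_cards sub2.
have bin := bin2_double #|T|.
have eqn : #|T| ^ 2 + #|T| + 2 = 2 * (1 + #|T| + 'C(#|T|, 2)).
  rewrite mulnDr bin; case: #|T| Hn => // m _ /=; lia.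
have cT : #|[set: {set T}]| = 2 ^ #|T| by rewrite -powersetT card_powerset cardsT.
have leT := subset_leqif_cards (subsetT Dset).
split.
- by rewrite eqn dE -card_le2 leq_mul2l le2.1.
- by rewrite dE -cT leT.1.
- rewrite eqn dE -card_le2; split.
    move/eqP; rewrite eqn_mul2l /= eq_sym le2.2 => /eqP DS.
    have DS' : forall D, D \in Dset -> #|D| <= 2.
      by move=> D; rewrite -DS inE.
    pose f x y := (x != y) && ~~ e x y.
    have firr : irreflexive f by move=> x; rewrite /f eqxx.
    have fsym : symmetric f by move=> x y; rewrite /f eq_sym sym.
    have fdeg x : #|[set y | f x y]| <= 1.
      rewrite leqNgt; apply/negP => /card_gt1P [y [z []]].
      rewrite !inE /f => /andP[nxy exy] /andP[nxz exz] nyz.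
      have : [set x; y; z] \in Dset.
        rewrite inE; apply/forall_inP => w Hw.
        have exx := irr x; have eyy := irr y; have ezz := irr z.
        have eyx : e y x = false by rewrite sym; apply/negbTE.
        have ezx : e z x = false by rewrite sym; apply/negbTE.
        move/negbTE: exy => exy; move/negbTE: exz => exz.
        rewrite leqNgt; apply/negP => /card_gt1P [u [v [Hu Hv nuv]]].
        move: Hw Hu Hv nuv; rewrite !inE.
        move=> /orP[/orP[]|]/eqP-> /andP[/orP[/orP[]|]/eqP-> e1]
          /andP[/orP[/orP[]|]/eqP-> e2];
          move: e1 e2;
          by rewrite ?(exx, eyy, ezz, exy, eyx, exz, ezx, eqxx).
      move/DS'; rewrite leqNgt => /negP; apply; apply/card_gt2P.
      exists x, y, z; rewrite !inE !eqxx ?orbT; split => //; split => //.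
      by rewrite eq_sym.
    have [p [Hp Hf]] := @partition_of T f firr fsym fdeg.
    exists p; split => // x y nxy.
    by rewrite -Hf // /f nxy /= negbK.
  move=> [p [Hp He]].
  suff: Dset \subset [set D : {set T} | #|D| <= 2].
    by move=> S; congr (2 * _); apply/eqP; rewrite eqn_leq subset_leq_card
      ?subset_leq_card.
  apply/subsetP => D; rewrite !inE => dD; rewrite leqNgt; apply/negP.
  move=> /card_gt2P [a [b [c [[aD bD cD] [nab nbc nca]]]]].
  have nac : a != c by rewrite eq_sym.
  have nba : b != a by rewrite eq_sym.
  have ncb : c != b by rewrite eq_sym.
  case: (eqVneq (p a) (p b)) => [pab|pab].
    case: (eqVneq (p c) (p a)) => [pca|pca].
      have: 2 < #|[set x | p x == p a]|.
        apply/card_gt2P; exists a, b, c; rewrite !inE pca -pab eqxx; by [].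
      by rewrite ltnNge Hp.
    move: dD; apply/negP; apply: (@two_nbrs T e D c a b cD aD bD nab); rewrite He //.
    by rewrite -pab.
  case: (eqVneq (p a) (p c)) => [pac|pac].
    move: dD; apply/negP; apply: (@two_nbrs T e D b a c bD aD cD nac).
      by rewrite He // eq_sym.
    by rewrite He // -pac eq_sym.
  by move: dD; apply/negP; apply: (@two_nbrs T e D a b c aD bD cD nbc); rewrite He.
- rewrite dE -cT; split.
    move/eqP; rewrite leT.2 => /eqP DT.
    have dT : dissociation e [set: T].
      have : [set: T] \in Dset by rewrite DT inE.
      by rewrite inE.
    have deg x : #|[set y | e x y]| <= 1.
      move/forall_inP: dT => /(_ x (in_setT x)).
      by congr (_ <= _); apply: eq_card => y; rewrite !inE.
    have [p [Hp Hf]] := @partition_of T e irr sym deg.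
    exists p; split => // x y; case: (eqVneq x y) => [->|nxy]; first by rewrite irr.
    by rewrite Hf.
  move=> [p [Hp He]]; apply: eq_card => D; rewrite !inE.
  apply: (@diss_sub _ _ D [set: T]); first exact: subsetT.
  apply/forall_inP => x _.
  apply: leq_trans (_ : #|[set y | p y == p x] :\ x| <= 1).
    apply: subset_leq_card; apply/subsetP => y; rewrite !inE He /=.
    by case/andP => nxy /eqP pxy; rewrite eq_sym nxy pxy eqxx.
  have := Hp (p x); rewrite (cardsD1 x) !inE eqxx /=; lia.
Qed.
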